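(* For $q\in\mathbb{C}$ with $|q|<1$ and each integer $n\ge0$, let $$K_{n,q}=[2]_q\left(\frac{1}{1-q}\right)^n\sum_{l=0}^n\binom nl(-1)^l\frac{1}{1+q^{l+1}}.$$ Then for every $n\ge 0$, $\lim_{q\to1}K_{n,q}=E_n$, where the Euler numbers $E_n$ are defined by $\frac{2}{e^t+1}=\sum_{n=0}^\infty E_n\frac{t^n}{n!}$ for $|t|<\pi$.
   Context: For $q\in\mathbb{C}$ with $|q|<1$, $[2]_q=1+q$. The limit is taken with $q$ in the open unit disk tending to $1$. *)

(* Defs.v *)
From Stdlib Require Import Reals.
From Coquelicot Require Import Coquelicot.
Open Scope R_scope.

Definition binomR (n l : nat) : R := Binomial.C n l.

Definition qint2 (q : C) : C := (1 + q)%C.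

Definition K (n : nat) (q : C) : C :=
  (qint2 q * Cpow (/ (1 - q))%C n *
   sum_n (fun l : nat =>
     (RtoC (binomR n l) * Cpow (RtoC (-1)) l / (1 + Cpow q (S l)))%C) n)%C.

Definition is_Euler_numbers (E : nat -> R) : Prop :=
  forall t : R, Rabs t < PI ->
    is_series (fun n : nat => E n * t ^ n / INR (Factorial.fact n)) (2 / (exp t + 1)).

Definition to_one_in_disk : (C -> Prop) -> Prop :=
  within (fun q : C => Cmod q < 1) (locally (RtoC 1)).

(* Main.v *)
Require Import Defs.
From Stdlib Require Import Reals.
From Coquelicot Require Import Coquelicot.
From Stdlib Require Import FunctionalExtensionality Lia Lra.

Ltac toR := match goal with |- @eq _ ?x ?y => change (@eq R x y) end.

Lemma radius_ge (a : nat -> R) (r : R) :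
  ex_series (fun n => a n * r ^ n) -> Rbar_le (Rabs r) (CV_radius a).
Proof.
  intros Hs. destruct (CV_radius_bounded a) as [Hub _]. apply Hub.
  apply ex_series_lim_0 in Hs.
  destruct (filterlim_bounded (fun n => a n * r ^ n)) as [M HM].
  { exists 0. exact Hs. }
  exists M. intro n. specialize (HM n).
  rewrite RPow_abs, Rabs_mult, Rabs_Rabsolu, <- Rabs_mult. exact HM.
Qed.

Lemma is_series_zero : is_series (fun _ : nat => 0) 0.
Proof.
  unfold is_series. apply filterlim_ext with (fun _ => 0).
  - intro n. rewrite sum_n_const. simpl. ring.
  - apply filterlim_const.
Qed.

Definition dser (n : nat) : R := match n with O => 2 | S _ => 0 end.

Lemma is_pseries_d t : is_pseries dser t 2.
Proof.
  apply is_pseries_R. apply is_series_decr_1.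
  apply is_series_ext with (fun _ => 0).
  - intro n. simpl. ring.
  - match goal with |- is_series _ ?l => replace l with 0 end.
    + apply is_series_zero.
    + simpl. change (0 = 2 + - (2 * 1)). ring.
Qed.

Lemma E_facts (E : nat -> R) (HE : is_Euler_numbers E) :
  E 0%nat = 1 /\ forall n, (1 <= n)%nat ->
    sum_f_R0 (fun k => Binomial.C n k * E k) n + E n = 0.
Proof.
  set (a := fun n => E n / INR (Factorial.fact n)).
  set (e := fun n => / INR (Factorial.fact n)).
  assert (Hpa : forall t, Rabs t < PI -> is_pseries a t (2 / (exp t + 1))).
  { intros t Ht. apply is_pseries_R. apply is_series_ext with (2 := HE t Ht).
    intro n. unfold a. unfold Rdiv. toR. ring. }
  assert (HPI : 1 < PI) by (pose proof PI2_1; pose proof PI_RGT_0; lra).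
  assert (Ra : Rbar_le 1 (CV_radius a)).
  { rewrite <- Rabs_R1. apply radius_ge. pose proof (Hpa 1 ltac:(rewrite Rabs_R1; exact HPI)) as H.
    apply is_pseries_R in H. eexists; exact H. }
  assert (Re : Rbar_le 1 (CV_radius e)).
  { rewrite <- Rabs_R1. apply radius_ge. pose proof (is_exp_Reals 1) as H.
    apply is_pseries_R in H. eexists; exact H. }
  set (b := PS_plus (PS_mult a e) a).
  assert (Hb : forall t, Rabs t < 1 -> is_pseries b t 2).
  { intros t Ht.
    assert (Hta : Rbar_lt (Rabs t) (CV_radius a)) by (apply (Rbar_lt_le_trans _ (Finite 1)); [exact Ht| exact Ra]).
    assert (Hte : Rbar_lt (Rabs t) (CV_radius e)) by (apply (Rbar_lt_le_trans _ (Finite 1)); [exact Ht| exact Re]).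
    assert (Hp := Hpa t ltac:(lra)).
    pose proof (is_pseries_plus _ _ _ _ _ (is_pseries_mult _ _ _ _ _ Hp (is_exp_Reals t) Hta Hte) Hp) as H.
    replace 2 with (plus (2 / (exp t + 1) * exp t) (2 / (exp t + 1))).
    - exact H.
    - change (2 / (exp t + 1) * exp t + 2 / (exp t + 1) = 2).
      pose proof (exp_pos t). field. lra. }
  assert (Hcoef : forall n, b n = dser n).
  { intro n. apply PSeries_ext_recip.
    - eapply Rbar_lt_le_trans; [|apply (radius_ge b (1/2))].
      + simpl. rewrite Rabs_pos_eq; lra.
      + pose proof (Hb (1/2) ltac:(rewrite Rabs_pos_eq; lra)) as H. apply is_pseries_R in H.
        eexists; exact H.
    - eapply Rbar_lt_le_trans; [|apply (radius_ge dser 1)].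
      + simpl. rewrite Rabs_R1; lra.
      + pose proof (is_pseries_d 1) as H. apply is_pseries_R in H. eexists; exact H.
    - exists (mkposreal 1 Rlt_0_1). intros x Hx.
      assert (Hx' : Rabs x < 1).
      { change (Rabs (x - 0) < 1) in Hx. rewrite Rminus_0_r in Hx. exact Hx. }
      rewrite (is_pseries_unique _ _ _ (Hb x Hx')).
      rewrite (is_pseries_unique _ _ _ (is_pseries_d x)). reflexivity. }
  split.
  - pose proof (Hcoef 0%nat) as H. unfold b, PS_plus, PS_mult, a, e in H. simpl in H.
    change (E 0%nat / 1 * / 1 + E 0%nat / 1 = 2) in H. lra.
  - intros n Hn. pose proof (Hcoef n) as H. destruct n as [|m]; [lia|].
    unfold b, PS_plus, PS_mult in H. change (sum_f_R0 (fun k : nat => a k * e (S m - k)%nat) (S m) + a (S m) = 0) in H.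
    set (n := S m) in *.
    assert (Hf : INR (Factorial.fact n) <> 0) by apply INR_fact_neq_0.
    transitivity (INR (Factorial.fact n) * (sum_f_R0 (fun k : nat => a k * e (n - k)%nat) n + a n)).
    + rewrite Rmult_plus_distr_l, scal_sum. f_equal.
      * apply sum_eq. intros k Hk. unfold Binomial.C, a, e.
        pose proof (INR_fact_neq_0 k). pose proof (INR_fact_neq_0 (n - k)). field. auto.
      * unfold a. field. auto.
    + rewrite H. ring.
Qed.

Open Scope C_scope.
Ltac toC := match goal with |- @eq _ ?a ?b => change (@eq C a b) end.

Lemma sumC_plus (f g : nat -> C) m :
  sum_n (fun k => f k + g k) m = sum_n f m + sum_n g m.
Proof. exact (sum_n_plus f g m). Qed.

Lemma sumC_mult_l (c : C) (f : nat -> C) m :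
  sum_n (fun k => c * f k) m = c * sum_n f m.
Proof. exact (@sum_n_mult_l C_Ring c f m). Qed.

Lemma sumC_mult_r (c : C) (f : nat -> C) m :
  sum_n (fun k => f k * c) m = sum_n f m * c.
Proof. exact (@sum_n_mult_r C_Ring c f m). Qed.

Lemma sumC_Sn (f : nat -> C) m : sum_n f (S m) = sum_n f m + f (S m).
Proof. exact (sum_Sn f m). Qed.

Lemma sumC_O (f : nat -> C) : sum_n f 0 = f 0%nat.
Proof. exact (sum_O f). Qed.

Lemma sumC_front (f : nat -> C) m :
  sum_n f (S m) = f 0%nat + sum_n (fun k => f (S k)) m.
Proof.
  unfold sum_n. rewrite sum_Sn_m by lia. rewrite sum_n_m_S. reflexivity.
Qed.

Lemma sumC_ext (f g : nat -> C) m : (forall k, (k <= m)%nat -> f k = g k) ->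
  sum_n f m = sum_n g m.
Proof. intros; apply sum_n_ext_loc; auto. Qed.

Lemma sumC_RtoC (f : nat -> R) m :
  sum_n (fun k => RtoC (f k)) m = RtoC (sum_f_R0 f m).
Proof.
  induction m.
  - rewrite sumC_O. reflexivity.
  - rewrite sumC_Sn, IHm. simpl. rewrite RtoC_plus. reflexivity.
Qed.

Lemma pascal_sum (n : nat) (f : nat -> C) :
  sum_n (fun k => RtoC (binomR (S n) k) * f k) (S n) =
  sum_n (fun k => RtoC (binomR n k) * f k) n +
  sum_n (fun k => RtoC (binomR n k) * f (S k)) n.
Proof.
  unfold binomR.
  destruct n as [|m].
  - rewrite sumC_Sn, !sumC_O. rewrite !Rcomplements.C_n_0, Rcomplements.C_n_n. reflexivity.
  - rewrite sumC_front, sumC_Sn.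
    rewrite sumC_front. rewrite (sumC_Sn (fun k => RtoC (Binomial.C (S m) k) * f (S k))).
    rewrite (sumC_ext (fun k => RtoC (Binomial.C (S (S m)) (S k)) * f (S k))
              (fun k => RtoC (Binomial.C (S m) (S k)) * f (S k) +
                        RtoC (Binomial.C (S m) k) * f (S k))).
    + rewrite sumC_plus. rewrite !Rcomplements.C_n_0, !Rcomplements.C_n_n. toC; ring.
    + intros k Hk. rewrite <- Binomial.pascal by lia. rewrite RtoC_plus. toC; ring.
Qed.

Lemma RtoC_m1 : RtoC (-1) = - (1).
Proof. unfold RtoC, Copp. simpl. f_equal; ring. Qed.

Section WV.
Variable q : C.
Hypothesis hq : q <> 1.

Lemma hq' : 1 - q <> 0.
Proof. intro H. apply hq. apply Ceq_minus in H. auto. Qed.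

Fixpoint W (a : nat -> C) (n j : nat) : C :=
  match n with
  | O => a j
  | S n => (W a n j - W a n (S j)) / (1 - q)
  end.

Fixpoint V (a : nat -> C) (n j : nat) : C :=
  match n with
  | O => a j
  | S n => (V a n j - q * V a n (S j)) / (1 - q)
  end.

Lemma lemA a n : forall j,
  V a n j = sum_n (fun k => RtoC (binomR n k) * (Cpow q k * W a k j)) n.
Proof.
  induction n; intro j.
  - rewrite sumC_O. simpl. unfold binomR. rewrite Rcomplements.C_n_0. toC; ring.
  - rewrite pascal_sum. simpl V. rewrite !IHn.
    rewrite <- sumC_plus.
    transitivity (sum_n (fun k => (RtoC (binomR n k) * (Cpow q k * W a k j) +
       - q * (RtoC (binomR n k) * (Cpow q k * W a k (S j)))) * / (1 - q)) n).
    + rewrite sumC_mult_r, sumC_plus, sumC_mult_l. unfold Cdiv, Cminus. toC; ring.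
    + apply sumC_ext. intros k _. simpl. pose proof hq'. toC. field. auto.
Qed.

Lemma lemB a n : forall j,
  W a n j = Cpow (/ (1 - q)) n *
    sum_n (fun l => RtoC (binomR n l) * Cpow (RtoC (-1)) l * a (j + l)%nat) n.
Proof.
  induction n; intro j.
  - rewrite sumC_O. simpl. unfold binomR. rewrite Rcomplements.C_n_0. rewrite Nat.add_0_r. toC; ring.
  - simpl W. rewrite !IHn.
    rewrite (sumC_ext (fun l => RtoC (binomR (S n) l) * Cpow (RtoC (-1)) l * a (j + l)%nat) (fun l => RtoC (binomR (S n) l) * (Cpow (RtoC (-1)) l * a (j + l)%nat)))
      by (intros; toC; ring).
    rewrite (pascal_sum n (fun l => Cpow (RtoC (-1)) l * a (j + l)%nat)).
    rewrite (sumC_ext (fun k => RtoC (binomR n k) * (Cpow (RtoC (-1)) (S k) * a (j + S k)%nat))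
        (fun k => RtoC (-1) * (RtoC (binomR n k) * Cpow (RtoC (-1)) k * a (S j + k)%nat))).
    + rewrite sumC_mult_l.
      rewrite (sumC_ext (fun k => RtoC (binomR n k) * (Cpow (RtoC (-1)) k * a (j + k)%nat))
        (fun k => RtoC (binomR n k) * Cpow (RtoC (-1)) k * a (j + k)%nat)) by (intros; toC; ring).
      pose proof hq'. simpl Cpow. rewrite RtoC_m1. toC. field. auto.
    + intros k _. rewrite Nat.add_succ_r. simpl Cpow. simpl (S j + k)%nat. toC; ring.
Qed.

Lemma W_lin a b c n : forall j,
  W (fun l => a l + c * b l) n j = W a n j + c * W b n j.
Proof.
  induction n; intro j; simpl.
  - reflexivity.
  - rewrite !IHn. pose proof hq'. toC. field. auto.
Qed.

Lemma W_const n : forall j, W (fun _ => 1) (S n) j = 0.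
Proof.
  induction n; intro j; simpl.
  - pose proof hq'. unfold Cdiv. toC. ring.
  - simpl in IHn. rewrite !IHn. pose proof hq'. unfold Cdiv. toC. ring.
Qed.

Lemma W_shift a n : forall j,
  W (fun l => Cpow q l * a l) n j = Cpow q j * V a n j.
Proof.
  induction n; intro j; simpl.
  - reflexivity.
  - rewrite !IHn. simpl. pose proof hq'. toC. field. auto.
Qed.

End WV.

Lemma disk_ne1 q : Cmod q < 1 -> q <> 1.
Proof. intros H E. subst. rewrite Cmod_1 in H. lra. Qed.

Lemma disk_nz q m : Cmod q < 1 -> 1 + Cpow q (S m) <> 0.
Proof.
  intros H E.
  assert (H0 : Cpow q (S m) = - (1)).
  { transitivity ((1 + Cpow q (S m)) - 1); [toC; ring|]. rewrite E. toC; ring. }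
  assert (Cmod (Cpow q (S m)) = 1) by (rewrite H0, Cmod_opp, Cmod_1; reflexivity).
  rewrite Cmod_pow in H1.
  assert (Cmod q ^ S m < 1)%R.
  { apply pow_lt_1_compat. split; [apply Cmod_ge_0 | exact H]. lia. }
  lra.
Qed.

Lemma K_form q k : Cmod q < 1 ->
  K k q = (1 + q) * W q (fun l => / (1 + Cpow q (S l))) k 0.
Proof.
  intro H. rewrite lemB by (apply disk_ne1; auto).
  unfold K, qint2. unfold Cdiv.
  rewrite (sumC_ext (fun l => RtoC (binomR k l) * Cpow (RtoC (-1)) l * / (1 + Cpow q (S l)))
     (fun l => RtoC (binomR k l) * Cpow (RtoC (-1)) l * / (1 + Cpow q (S (0 + l)))))
   by reflexivity.
  toC; ring.
Qed.

Lemma K_rec n q : Cmod q < 1 -> (1 <= n)%nat ->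
  K n q + q * sum_n (fun k => RtoC (binomR n k) * (Cpow q k * K k q)) n = 0.
Proof.
  intros H Hn.
  pose proof (disk_ne1 q H) as hq.
  set (a := fun l => / (1 + Cpow q (S l))).
  assert (E1 : (fun l => a l + q * (Cpow q l * a l)) = (fun _ => 1)).
  { apply functional_extensionality. intro l. unfold a.
    pose proof (disk_nz q l H). simpl Cpow in *. toC. field. auto. }
  assert (E2 := W_lin q hq a (fun l => Cpow q l * a l) q n 0).
  cbv beta in E2. rewrite E1 in E2. rewrite W_shift in E2 by auto. rewrite lemA in E2 by auto.
  destruct n as [|m]; [lia|].
  rewrite W_const in E2 by auto.
  rewrite (sumC_ext (fun k => RtoC (binomR (S m) k) * (Cpow q k * K k q))
     (fun k => (1 + q) * (RtoC (binomR (S m) k) * (Cpow q k * W q a k 0)))).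
  - rewrite sumC_mult_l. rewrite K_form by auto. fold a.
    simpl Cpow in E2. 
    transitivity ((1 + q) * (W q a (S m) 0 + q * (1 * sum_n
          (fun k : nat => RtoC (binomR (S m) k) * (Cpow q k * W q a k 0)) (S m)))).
    + toC; ring.
    + rewrite <- E2. toC; ring.
  - intros k _. rewrite K_form by auto. fold a. toC; ring.
Qed.
Open Scope C_scope.

Section Lims.
Context {T : Type} {F : (T -> Prop) -> Prop} {FF : Filter F}.

Lemma L_plus (f g : T -> C) (a b c : C) : a + b = c ->
  filterlim f F (locally a) -> filterlim g F (locally b) ->
  filterlim (fun x => f x + g x) F (locally c).
Proof.
  intros <- Hf Hg.
  eapply filterlim_comp_2; [exact Hf | exact Hg |].
  apply (@filterlim_plus C_AbsRing C_NormedModule).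
Qed.

Lemma L_mult (f g : T -> C) (a b c : C) : a * b = c ->
  filterlim f F (locally a) -> filterlim g F (locally b) ->
  filterlim (fun x => f x * g x) F (locally c).
Proof.
  intros <- Hf Hg.
  eapply filterlim_comp_2; [exact Hf | exact Hg |].
  intros P HP. apply locally_C in HP.
  destruct (@filterlim_mult C_AbsRing a b P HP) as [Q R HQ HR HQR].
  apply (Filter_prod _ _ _ Q R); [apply locally_C; exact HQ | apply locally_C; exact HR |].
  exact HQR.
Qed.

Lemma L_inv (g : T -> C) (b : C) : b <> 0 ->
  filterlim g F (locally b) -> filterlim (fun x => / g x) F (locally (/ b)).
Proof.
  intros Hb Hg.
  apply <- (@filterlim_locally_ball_norm C_AbsRing T C_NormedModule F FF). intro eps.
  assert (Hr : (0 < Cmod b)%R) by (apply Cmod_gt_0; exact Hb).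
  set (r := Cmod b) in *.
  assert (Hd : (0 < Rmin (r / 2) (eps * r * r / 2))%R).
  { apply Rmin_pos; [lra|]. pose proof (cond_pos eps). apply Rmult_lt_0_compat; [|lra].
    apply Rmult_lt_0_compat; [apply Rmult_lt_0_compat|]; lra. }
  pose proof (proj1 (@filterlim_locally_ball_norm C_AbsRing T C_NormedModule F FF g b) Hg (mkposreal _ Hd)) as Hev.
  eapply filter_imp; [|exact Hev].
  intros x Hx. unfold ball_norm in *. simpl in Hx.
  change (Cmod (g x - b) < Rmin (r / 2) (eps * r * r / 2))%R in Hx.
  change (Cmod (/ g x - / b) < eps)%R.
  pose proof (Rmin_l (r / 2) (eps * r * r / 2)). pose proof (Rmin_r (r / 2) (eps * r * r / 2)).
  assert (Hg1 : (r / 2 < Cmod (g x))%R).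
  { pose proof (Cmod_triangle (g x) (b - g x)).
    replace (g x + (b - g x)) with b in H1 by (toC; ring).
    assert (Cmod (b - g x) = Cmod (g x - b)).
    { rewrite <- Cmod_opp. f_equal. toC; ring. }
    fold r in H1. lra. }
  assert (Hgx : g x <> 0) by (intro E; rewrite E, Cmod_0 in Hg1; lra).
  replace (/ g x - / b) with ((b - g x) / (g x * b)) by (toC; field; auto).
  rewrite Cmod_div by (apply Cmult_neq_0; auto).
  rewrite Cmod_mult. fold r.
  assert (Cmod (b - g x) = Cmod (g x - b)).
  { rewrite <- Cmod_opp. f_equal. toC; ring. }
  rewrite H1.
  apply Rmult_lt_reg_r with (Cmod (g x) * r)%R.
  { apply Rmult_lt_0_compat; lra. }
  unfold Rdiv. rewrite Rmult_assoc, Rinv_l by (apply Rgt_not_eq, Rmult_lt_0_compat; lra).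
  rewrite Rmult_1_r.
  apply Rlt_le_trans with (eps * r * r / 2)%R; [lra|].
  pose proof (cond_pos eps).
  assert (eps * r * r / 2 = eps * (r / 2 * r))%R by field. rewrite H3.
  apply Rmult_le_compat_l; [lra|]. apply Rmult_le_compat_r; lra.
Qed.

Lemma L_sum (g : nat -> T -> C) (l : nat -> C) m :
  (forall k, (k <= m)%nat -> filterlim (g k) F (locally (l k))) ->
  filterlim (fun x => sum_n (fun k => g k x) m) F (locally (sum_n l m)).
Proof.
  induction m; intro H.
  - apply filterlim_ext with (f := g 0%nat). { intro x. rewrite sumC_O. reflexivity. }
    rewrite sumC_O. apply H. lia.
  - apply filterlim_ext with (f := fun x => sum_n (fun k => g k x) m + g (S m) x).
    { intro x. rewrite sumC_Sn. reflexivity. }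
    apply L_plus with (sum_n l m) (l (S m)).
    + symmetry. apply sumC_Sn.
    + apply IHm. intros; apply H; lia.
    + apply H; lia.
Qed.

End Lims.

Instance F1 : Filter to_one_in_disk.
Proof. unfold to_one_in_disk. apply within_filter. apply locally_filter. Qed.

Lemma Lid : filterlim (fun q : C => q) to_one_in_disk (locally (RtoC 1)).
Proof.
  intros P HP. unfold filtermap, to_one_in_disk, within.
  apply filter_imp with P. { intros; auto. } exact HP.
Qed.

Lemma Lconst (c : C) : filterlim (fun _ : C => c) to_one_in_disk (locally c).
Proof. apply filterlim_const. Qed.

Lemma Lpow k : filterlim (fun q : C => Cpow q k) to_one_in_disk (locally (RtoC 1)).
Proof.
  induction k.
  - apply filterlim_ext with (f := fun _ => RtoC 1). { intros; reflexivity. } apply Lconst.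
  - apply L_mult with (RtoC 1) (RtoC 1). toC; ring. apply Lid. exact IHk.
Qed.


Theorem mainTheorem4 (E : nat -> R) (HE : is_Euler_numbers E) (n : nat) :
  filterlim (K n) to_one_in_disk (locally (RtoC (E n))).
Proof.
  destruct (E_facts E HE) as [E0 Erec].
  assert (Hall : forall n k, (k <= n)%nat ->
     filterlim (K k) to_one_in_disk (locally (RtoC (E k)))).
  2: { apply (Hall n n). lia. }
  clear n. induction n as [|n IH]; intros k Hk.
  - assert (k = 0%nat) by lia. subst k. rewrite E0.
    apply filterlim_ext_loc with (fun _ => RtoC 1).
    + unfold to_one_in_disk, within. apply filter_forall. intros q Hq.
      pose proof (disk_nz q 0 Hq) as Hnz. simpl Cpow in Hnz.
      unfold K, qint2. rewrite sumC_O. simpl. unfold binomR. rewrite Rcomplements.C_n_0.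
      unfold Cdiv. toC. field. rewrite Cmult_1_r in Hnz. exact Hnz.
    + apply filterlim_const.
  - destruct (Nat.le_gt_cases k n) as [Hkn|Hkn]; [apply IH; exact Hkn|].
    assert (k = S n) by lia. subst k.
    set (Sg := fun q => sum_n (fun k => RtoC (binomR (S n) k) * (Cpow q k * K k q)) n).
    apply filterlim_ext_loc with (fun q => (- (1) * q * Sg q) * / (1 + Cpow q (S (S n)))).
    + unfold to_one_in_disk, within. apply filter_forall. intros q Hq.
      pose proof (K_rec (S n) q Hq ltac:(lia)) as H.
      rewrite sumC_Sn in H.
      assert (Hb1 : binomR (S n) (S n) = 1%R) by (unfold binomR; apply Rcomplements.C_n_n).
      rewrite Hb1 in H.
      unfold Sg.
      set (S0 := sum_n (fun k => RtoC (binomR (S n) k) * (Cpow q k * K k q)) n) in *.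
      pose proof (disk_nz q (S n) Hq) as Hnz.
      assert (HP : Cpow q (S (S n)) = q * Cpow q (S n)) by reflexivity.
      rewrite HP in *.
      replace (- (1) * q * S0) with (K (S n) q * (1 + q * Cpow q (S n)) -
          (K (S n) q + q * (S0 + 1 * (Cpow q (S n) * K (S n) q)))) by (toC; ring).
      rewrite H. toC. field. exact Hnz.
    + set (SL := sum_n (fun k => RtoC (binomR (S n) k) * (1 * RtoC (E k))) n).
      apply L_mult with (- (1) * 1 * SL) (/ (1 + 1)).
      * assert (HSL : SL = RtoC (sum_f_R0 (fun k => (Binomial.C (S n) k * E k)%R) n)).
        { unfold SL. rewrite <- sumC_RtoC. apply sumC_ext. intros. rewrite RtoC_mult.
          unfold binomR. toC; ring. }
        pose proof (Erec (S n) ltac:(lia)) as He. rewrite tech5 in He.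
        rewrite Rcomplements.C_n_n in He.
        rewrite HSL.
        set (s0 := sum_f_R0 (fun k => (Binomial.C (S n) k * E k)%R) n) in *.
        assert (HE1 : E (S n) = (- s0 / 2)%R) by lra. rewrite HE1.
        unfold RtoC, Cmult, Cinv, Copp, Cplus; simpl; f_equal; field.
      * apply L_mult with (- (1) * 1) SL; [reflexivity| |].
        -- apply L_mult with (- (1)) (RtoC 1); [reflexivity|apply Lconst|apply Lid].
        -- unfold Sg, SL. apply L_sum. intros k Hk2.
           apply L_mult with (RtoC (binomR (S n) k)) (1 * RtoC (E k)); [reflexivity|apply Lconst|].
           apply L_mult with (RtoC 1) (RtoC (E k)); [reflexivity|apply Lpow|]. apply IH. lia.
      * apply L_inv.
        -- intro Hc. apply (f_equal fst) in Hc. simpl in Hc. lra.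
        -- apply L_plus with (RtoC 1) (RtoC 1); [reflexivity|apply Lconst|apply Lpow].
Qed.
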